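(* Let $D$ be an integral domain, $R=R(D)$, and let $f,g\in D\setminus\{0\}$. The following are equivalent: (1) $\mathfrak p_g\subseteq\mathfrak p_f$; (2) $\sqrt{(\frac1g)R}\subseteq\sqrt{(\frac1f)R}$; (3) there exists $e\ge1$ such that $\frac1{g^e}\in(\frac1f)R$ (equivalently, $\frac f{g^e}\in R$).
   Context: For an integral domain $D$ with fraction field $F$, the reciprocal complement $R(D)$ is the subring of $F$ generated by all $1/d$, $d\in D\setminus\{0\}$. For nonzero $f\in D$, $\mathfrak p_f$ denotes the unique prime ideal of $R(D)$ maximal with respect to not containing $1/f$. $\sqrt I$ denotes the radical of an ideal $I$. *)

(* Defs.v *)
From HB Require Import structures.
From mathcomp Require Import all_boot all_algebra fraction.
From Stdlib Require Import ClassicalEpsilon.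
Set Implicit Arguments. Unset Strict Implicit. Unset Printing Implicit Defensive.
Import GRing.Theory.
Local Open Scope ring_scope.

Definition frac_emb (D : idomainType) (d : D) : {fraction D} := @FracField.tofrac D d.

Definition is_subring (F : fieldType) (S : F -> Prop) : Prop :=
  [/\ S 0, S 1, (forall x y, S x -> S y -> S (x - y))
    & (forall x y, S x -> S y -> S (x * y))].

(* R(D): the subring of F generated by all 1/d, d in D \ {0}
   (intersection of all subrings of F containing them). *)
Definition recip_compl (D : idomainType) : {fraction D} -> Prop :=
  fun x => forall S : {fraction D} -> Prop, is_subring S ->
    (forall d : D, d != 0 -> S (frac_emb d)^-1) -> S x.

Definition is_ideal (F : fieldType) (R I : F -> Prop) : Prop :=
  [/\ (forall x, I x -> R x), I 0, (forall x y, I x -> I y -> I (x + y))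
    & (forall r x, R r -> I x -> I (r * x))].

Definition is_prime_ideal (F : fieldType) (R P : F -> Prop) : Prop :=
  [/\ is_ideal R P, ~ P 1
    & (forall a b, R a -> R b -> P (a * b) -> P a \/ P b)].

Definition max_prime_avoiding (F : fieldType) (R : F -> Prop) (a : F)
  (P : F -> Prop) : Prop :=
  [/\ is_prime_ideal R P, ~ P a &
    forall Q, is_prime_ideal R Q -> ~ Q a -> (forall x, P x -> Q x) ->
      forall x, Q x -> P x].

(* p_f : the (unique, by the paper) prime ideal of R(D) maximal w.r.t. not
   containing 1/f, selected by Hilbert's epsilon. *)
Definition p_ideal (D : idomainType) (f : D) : {fraction D} -> Prop :=
  epsilon (inhabits (fun _ => False))
    (max_prime_avoiding (@recip_compl D) (frac_emb f)^-1).

Definition principal_ideal (F : fieldType) (R : F -> Prop) (a : F) : F -> Prop :=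
  fun x => exists r, R r /\ x = a * r.

Definition radical (F : fieldType) (R I : F -> Prop) : F -> Prop :=
  fun x => R x /\ exists n : nat, (0 < n)%N /\ I (x ^+ n).

(* Main.v *)
Require Import Defs.
From mathcomp Require Import all_boot all_algebra fraction.
From mathcomp Require Import boolp classical_sets.
From mathcomp Require Import ring.
From Stdlib Require Import ClassicalEpsilon.
Set Implicit Arguments. Unset Strict Implicit. Unset Printing Implicit Defensive.
Import GRing.Theory.
Local Open Scope ring_scope.

Definition SumI (F : fieldType) (A : F -> Prop) (x : F) : Prop :=
  exists s : seq F, (forall a, a \in s -> A a /\ a != 0) /\ x = \sum_(a <- s) a^-1.

Definition subr (F : fieldType) (A : F -> Prop) :=
  [/\ A 0, A 1, (forall x y, A x -> A y -> A (x + y)), (forall x, A x -> A (- x))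
    & (forall x y, A x -> A y -> A (x * y))].

Lemma SumI0 (F : fieldType) (A : F -> Prop) : SumI A 0.
Proof. by exists [::]; split => //; rewrite big_nil. Qed.

Lemma SumI_inv (F : fieldType) (A : F -> Prop) a : A a -> a != 0 -> SumI A a^-1.
Proof.
move=> Aa a0; exists [:: a]; split; first by move=> b; rewrite inE => /eqP ->.
by rewrite big_seq1.
Qed.

Lemma SumI1 (F : fieldType) (A : F -> Prop) : A 1 -> SumI A 1.
Proof. by move=> A1; rewrite -invr1; apply: SumI_inv => //; exact: oner_neq0. Qed.

Lemma SumID (F : fieldType) (A : F -> Prop) x y : SumI A x -> SumI A y -> SumI A (x + y).
Proof.
move=> [s [Hs ->]] [t [Ht ->]]; exists (s ++ t); split; last by rewrite big_cat.
by move=> a; rewrite mem_cat => /orP[/Hs|/Ht].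
Qed.

Lemma SumIN (F : fieldType) (A : F -> Prop) x : (forall a, A a -> A (- a)) ->
  SumI A x -> SumI A (- x).
Proof.
move=> AN [s [Hs ->]]; exists (map -%R s); split.
  move=> a /mapP [b /Hs [Ab b0] ->]; split; [exact: AN | by rewrite oppr_eq0].
rewrite big_map -sumrN; apply: eq_bigr => a _; by rewrite invrN.
Qed.

Lemma SumIM (F : fieldType) (A : F -> Prop) x y :
  (forall a b, A a -> A b -> A (a * b)) ->
  SumI A x -> SumI A y -> SumI A (x * y).
Proof.
move=> AM [s [Hs ->]] [t [Ht ->]]; elim: s Hs => [|a s IH] Hs.
  by rewrite big_nil mul0r; exact: SumI0.
rewrite big_cons mulrDl; apply: SumID; last by apply: IH => b bs; apply: Hs; rewrite inE bs orbT.
have [Aa a0] : A a /\ a != 0 by apply: Hs; rewrite inE eqxx.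
exists (map (fun b => a * b) t); split.
  move=> c /mapP [b /Ht [Ab b0] ->]; split; [exact: AM | by rewrite mulf_neq0].
rewrite big_map mulr_sumr; apply: eq_bigr => b _; by rewrite invfM mulrC.
Qed.

Lemma SumIB (F : fieldType) (A : F -> Prop) x y : (forall a, A a -> A (- a)) ->
  SumI A x -> SumI A y -> SumI A (x - y).
Proof. by move=> AN Sx Sy; apply: SumID => //; apply: SumIN. Qed.

Lemma SumI_mono (F : fieldType) (A A' : F -> Prop) x : (forall a, A a -> A' a) ->
  SumI A x -> SumI A' x.
Proof. by move=> AA [s [Hs ->]]; exists s; split => // a /Hs [/AA]. Qed.

Lemma SumI_qp (F : fieldType) (B : F -> Prop) (s : seq F) :
  B 0 -> B 1 -> (forall x y, B x -> B y -> B (x + y)) -> (forall x y, B x -> B y -> B (x * y)) ->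
  (forall a, a \in s -> B a /\ a != 0) ->
  exists q p, [/\ B q, B p, p != 0 & \sum_(a <- s) a^-1 = q / p].
Proof.
move=> B0 B1 BD BM; elim: s => [|a s IH] Hs.
  by exists 0, 1; split => //; [exact: oner_neq0 | rewrite big_nil mul0r].
have [Ba a0] : B a /\ a != 0 by apply: Hs; rewrite inE eqxx.
have [q [p [Bq Bp p0 E]]] : exists q p, [/\ B q, B p, p != 0 & \sum_(a <- s) a^-1 = q / p] by apply: IH => b bs; apply: Hs; rewrite inE bs orbT.
exists (p + a * q), (a * p); split; [by apply: BD => //; apply: BM | by apply: BM | by rewrite mulf_neq0 |].
rewrite big_cons E; field; by apply/andP.
Qed.

Definition isId (F : fieldType) (R M : F -> Prop) :=
  [/\ forall x, M x -> R x, M 0, (forall x y, M x -> M y -> M (x + y))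
    & (forall r x, R r -> M x -> M (r * x))].

Definition maxId (F : fieldType) (R M : F -> Prop) :=
  [/\ isId R M, ~ M 1
    & forall w, R w -> ~ M w -> exists m r, [/\ M m, R r & m + w * r = 1]].

Lemma SumI_sub (F : fieldType) (A : F -> Prop) : subr A -> forall x y,
  SumI A x -> SumI A y -> SumI A (x - y).
Proof. by case=> ? ? ? AN ? x y; exact: (SumIB AN). Qed.

Lemma exists_max (F : fieldType) (A : F -> Prop) (HA : subr A) z :
  SumI A z -> ~ (exists y, SumI A y /\ z * y = 1) ->
  exists M, maxId (SumI A) M /\ M z.
Proof.
case: (HA) => A0 A1 AD AN AM; move=> Rz nu.
pose R := SumI A.
pose P := fun X : set F => (forall x, ~ X x) \/ [/\ isId R X, ~ X 1 & X z].
have [|Am [PA maxA]] := @Zorn_bigcup F P.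
  move=> C CP Ctot.
  case: (pselect (exists X x, C X /\ X x)) => [[X0 [x0 [CX0 X0x0]]]|none]; last first.
    by left => x [X CX Xx]; apply: none; exists X, x.
  have CR : forall Y y, C Y -> Y y -> [/\ isId R Y, ~ Y 1 & Y z].
    by move=> Y y CY Yy; case: (CP Y CY) => // /(_ y).
  have [[_ X00 _ _] _ X0z] := CR _ _ CX0 X0x0.
  right; split.
  - split.
    + by move=> x [Y CY Yx]; have [[YR _ _ _] _ _] := CR _ _ CY Yx; exact: YR.
    + by exists X0.
    + move=> x y [Y1 CY1 Y1x] [Y2 CY2 Y2y].
      case: (Ctot _ _ CY1 CY2) => sub.
        have [[_ _ YD _] _ _] := CR _ _ CY2 Y2y.
        by exists Y2 => //; apply: YD => //; apply: sub.
      have [[_ _ YD _] _ _] := CR _ _ CY1 Y1x.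
      by exists Y1 => //; apply: YD => //; apply: sub.
    + move=> r x Rr [Y CY Yx]; have [[_ _ _ YM] _ _] := CR _ _ CY Yx.
      by exists Y => //; apply: YM.
  - by move=> [Y CY Y1]; have [_ nY1 _] := CR _ _ CY Y1; exact: nY1.
  - by exists X0.
have RD : forall x y, R x -> R y -> R (x + y) by move=> x y; exact: SumID.
have RM : forall x y, R x -> R y -> R (x * y) by move=> x y; exact: SumIM.
have R0 : R 0 by exact: SumI0.
have R1 : R 1 by exact: SumI1.
pose zR := fun x => exists r, R r /\ x = z * r.
have PzR : [/\ isId R zR, ~ zR 1 & zR z].
  split.
  - split.
    + by move=> x [r [Rr ->]]; apply: RM.
    + by exists 0; rewrite mulr0.
    + by move=> x y [r [Rr ->]] [r' [Rr' ->]]; exists (r + r'); rewrite mulrDr; split => //; apply: RD.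
    + by move=> s x Rs [r [Rr ->]]; exists (s * r); rewrite mulrCA; split => //; apply: RM.
  - by move=> [r [Rr E]]; apply: nu; exists r.
  - by exists 1; rewrite mulr1.
case: PA => [Aempty|[IA nA1 Az]].
  exfalso; apply: (maxA zR); last by right.
  split; first by move=> x /Aempty.
  by move=> /(_ z) H; case: PzR => _ _ /H /Aempty.
exists Am; split => //; split => // w Rw nAw.
case: (pselect (exists m r, [/\ Am m, R r & m + w * r = 1])) => // nJ1.
exfalso.
case: IA => AR A00 AD' AM'.
pose J := fun x => exists m r, [/\ Am m, R r & x = m + w * r].
apply: (maxA J); last first.
  right; split.
  - split.
    + by move=> x [m [r [Am' Rr ->]]]; apply: RD; [exact: AR | exact: RM].
    + by exists 0, 0; split => //; rewrite mulr0 addr0.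
    + move=> x y [m [r [Amm Rr ->]]] [m' [r' [Amm' Rr' ->]]].
      exists (m + m'), (r + r'); split; [exact: AD' | exact: RD | ring].
    + move=> s x Rs [m [r [Amm Rr ->]]].
      exists (s * m), (s * r); split; [exact: AM' | exact: RM | ring].
  - by move=> [m [r [Amm Rr E]]]; apply: nJ1; exists m, r; split.
  - by exists z, 0; split => //; rewrite mulr0 addr0.
split.
  by move=> x Ax; exists x, 0; split => //; rewrite mulr0 addr0.
by move=> /(_ w) H; apply: nAw; apply: H; exists 0, 1; split => //; rewrite mulr1 add0r.
Qed.
Lemma key_claim (F : fieldType) (A : F -> Prop) (HA : subr A) M a :
  maxId (SumI A) M -> A a -> a != 0 -> ~ SumI A a -> M a^-1.
Proof.
case: (HA) => A0 A1 AD AN AM.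
move=> [[MR M0 MD MM] M1 Mmax] Aa a0 nRa.
pose R := SumI A.
have RD : forall x y, R x -> R y -> R (x + y) by move=> x y; exact: SumID.
have RM : forall x y, R x -> R y -> R (x * y) by move=> x y; exact: SumIM.
have Rinv : forall b, A b -> b != 0 -> R b^-1 by move=> b; exact: SumI_inv.
have RN1 : R (-1) by rewrite -invrN1; apply: Rinv; [apply: AN | rewrite oppr_eq0 oner_neq0].
apply: contrapT => nMa.
have Mprime : forall u v, R u -> R v -> M (u * v) -> M u \/ M v.
  move=> u v Ru Rv Muv; case: (pselect (M u)) => Mu; [by left|right].
  have [m [r [Mm Rr E]]] := Mmax u Ru Mu.
  have -> : v = v * m + r * (u * v) by rewrite -[v in LHS]mulr1 -E; ring.
  by apply: MD; apply: MM.
have MN : forall x, M x -> M (- x) by move=> x Mx; rewrite -mulN1r; apply: MM.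
pose B := fun b => A b /\ (b = 0 \/ ~ M b^-1).
have B0 : B 0 by split => //; left.
have B1 : B 1 by split => //; right; rewrite invr1.
have BN : forall b, B b -> B (- b).
  move=> b [Ab [->|nM]]; split; [exact: AN | by left; rewrite oppr0 | exact: AN | right].
  by rewrite invrN => /MN; rewrite opprK.
have BM : forall b c, B b -> B c -> B (b * c).
  move=> b c [Ab Hb] [Ac Hc]; split; first exact: AM.
  case: Hb => [->|nb]; first by left; rewrite mul0r.
  case: Hc => [->|nc]; first by left; rewrite mulr0.
  case: (eqVneq b 0) => [->|b0]; first by left; rewrite mul0r.
  case: (eqVneq c 0) => [->|c0]; first by left; rewrite mulr0.
  right; rewrite invfM => /Mprime [] //; exact: Rinv.
have BD : forall b c, B b -> B c -> B (b + c).
  move=> b c Bb Bc; have [Ab Hb] := Bb; have [Ac Hc] := Bc; split; first exact: AD.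
  case: (eqVneq b 0) => [->|b0]; first by rewrite add0r; case: Bc.
  case: (eqVneq c 0) => [->|c0]; first by rewrite addr0; case: Bb.
  case: (eqVneq (b + c) 0) => [->|bc0]; first by left.
  right => Mbc.
  have [_ [/eqP|nbc]] := BM _ _ Bb Bc; first by rewrite mulf_eq0 (negbTE b0) (negbTE c0).
  apply: nbc.
  have -> : (b * c)^-1 = (b^-1 + c^-1) * (b + c)^-1.
    by field; rewrite b0 c0 bc0.
  by apply: MM => //; apply: RD; apply: Rinv.
have [m [r [Mm Rr E]]] := Mmax _ (Rinv _ Aa a0) nMa.
case: Rr => s [Hs Er].
pose P := fun d => `[< M d^-1 >].
pose s1 := filter (predC P) s.
pose s2 := filter P s.
have Er' : r = \sum_(d <- s1) d^-1 + \sum_(d <- s2) d^-1.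
  by rewrite Er (bigID P) /= !big_filter addrC.
have M2 : M (\sum_(d <- s2) d^-1).
  rewrite big_seq; apply: big_ind => // d; rewrite mem_filter => /andP[/asboolP Md _].
  exact: Md.
have Mw : M (1 - \sum_(d <- s1) (a * d)^-1).
  have -> : 1 - \sum_(d <- s1) (a * d)^-1 = m + a^-1 * \sum_(d <- s2) d^-1.
    have -> : \sum_(d <- s1) (a * d)^-1 = a^-1 * \sum_(d <- s1) d^-1.
      by rewrite mulr_sumr; apply: eq_bigr => d _; rewrite invfM.
    by rewrite -E Er'; ring.
  by apply: MD => //; apply: MM => //; apply: Rinv.
have Hs1 : forall x, x \in map (fun d => a * d) s1 -> B x /\ x != 0.
  move=> x /mapP [d]; rewrite mem_filter => /andP [/= nMd ds] ->.
  have [Ad d0] := Hs d ds.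
  split; last by rewrite mulf_neq0.
  split; first exact: AM.
  right; rewrite invfM => /Mprime [] //; try exact: Rinv.
  by move=> Md; move/asboolP: nMd; apply.
have [q [p [Bq Bp p0 Eqp]]] := SumI_qp B0 B1 BD BM Hs1.
rewrite big_map in Eqp.
have pq : p - q = 0.
  case: (eqVneq (p - q) 0) => // npq; exfalso.
  have [Apq _] := BD _ _ Bp (BN _ Bq).
  have Mp : M p^-1.
    have -> : p^-1 = (p - q)^-1 * (1 - q / p) by field; rewrite p0 npq.
    by apply: MM; [exact: Rinv | rewrite -Eqp].
  by case: Bp => _ [/eqP|]; [rewrite (negbTE p0) | apply].
have qp : q = p by apply/eqP; rewrite eq_sym -subr_eq0 pq.
apply: nRa; exists s1; split.
  by move=> d; rewrite mem_filter => /andP [_ /Hs].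
have : a^-1 * \sum_(d <- s1) d^-1 = 1.
  by rewrite mulr_sumr -[RHS](divff p0) -{1}qp -Eqp; apply: eq_bigr => d _; rewrite invfM.
move=> H; apply: (mulfI (invr_neq0 a0)); rewrite H mulVf //.
Qed.

Lemma locality (F : fieldType) (A : F -> Prop) (HA : subr A) x : SumI A x ->
  (exists y, SumI A y /\ x * y = 1) \/ (exists y, SumI A y /\ (1 - x) * y = 1).
Proof.
move=> Rx.
case: (pselect (exists y, SumI A y /\ x * y = 1)) => [|nu1]; first by left.
case: (pselect (exists y, SumI A y /\ (1 - x) * y = 1)) => [|nu2]; first by right.
exfalso.
case: (HA) => A0 A1 AD AN AM.
have R1x : SumI A (1 - x) by apply: SumIB => //; exact: SumI1.
have [M1 [maxM1 M1x]] := exists_max HA Rx nu1.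
have [M2 [maxM2 M2x]] := exists_max HA R1x nu2.
have RN1 : SumI A (-1) by rewrite -invrN1; apply: SumI_inv; [apply: AN | rewrite oppr_eq0 oner_neq0].
case: Rx => s [Hs Ex].
pose P := fun d => `[< SumI A d >].
pose u := \sum_(d <- filter P s) d^-1.
pose y := \sum_(d <- filter (predC P) s) d^-1.
have Exuy : x = u + y by rewrite Ex (bigID P) /= /u /y !big_filter.
have My : forall M, maxId (SumI A) M -> M y.
  move=> M maxM; have [[MR M0 MD MM] _ _] := maxM.
  rewrite /y big_seq; apply: big_ind => // d; rewrite mem_filter => /andP [/= nPd ds].
  have [Ad d0] := Hs d ds.
  apply: key_claim maxM Ad d0 _ => // Rd; move: nPd; by rewrite /P asboolT.
have [[M1R M10 M1D M1M] M11 _] := maxM1.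
have [[M2R M20 M2D M2M] M21 _] := maxM2.
have M1u : M1 u.
  have -> : u = x + (-1) * y by rewrite Exuy; ring.
  by apply: M1D => //; apply: M1M => //; apply: My.
pose B := fun d => A d /\ SumI A d.
have [q [p [[Aq Rq] [Ap Rp] p0 Eqp]]] := @SumI_qp F B (filter P s)
  (conj A0 (SumI0 A)) (conj A1 (SumI1 A1))
  (fun a b Ba Bb => conj (AD _ _ Ba.1 Bb.1) (SumID Ba.2 Bb.2))
  (fun a b Ba Bb => conj (AM _ _ Ba.1 Bb.1) (SumIM AM Ba.2 Bb.2))
  (fun d => ltac:(rewrite mem_filter => /andP [/asboolP Rd ds]; have [Ad d0] := Hs d ds; by split)).
case: (eqVneq q 0) => [q0|q0].
  have u0 : u = 0 by rewrite /u Eqp q0 mul0r.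
  apply: M21; have -> : 1 = (1 - x) + x by ring.
  by apply: M2D => //; rewrite Exuy u0 add0r; apply: My.
apply: M11.
have -> : 1 = (p / q) * u by rewrite /u Eqp; field; rewrite q0 p0.
by apply: M1M => //; apply: SumIM => //; apply: SumI_inv.
Qed.

Definition AD (D : idomainType) : {fraction D} -> Prop := fun x => exists d : D, x = frac_emb d.
Definition Af (D : idomainType) (f : D) : {fraction D} -> Prop :=
  fun x => exists (d : D) (k : nat), x = frac_emb d / frac_emb f ^+ k.

Lemma emb_eq0 (D : idomainType) (d : D) : (frac_emb d == 0) = (d == 0).
Proof. exact: tofrac_eq0. Qed.

Lemma subr_AD (D : idomainType) : subr (@AD D).
Proof.
rewrite /AD /frac_emb; split.
- by exists 0; rewrite rmorph0.
- by exists 1; rewrite rmorph1.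
- by move=> x y [d ->] [e ->]; exists (d + e); rewrite rmorphD.
- by move=> x [d ->]; exists (- d); rewrite rmorphN.
- by move=> x y [d ->] [e ->]; exists (d * e); rewrite rmorphM.
Qed.

Lemma fidD (K : fieldType) (a b c : K) k l : c != 0 ->
  a / c ^+ k + b / c ^+ l = (a * c ^+ l + b * c ^+ k) / c ^+ (k + l).
Proof. by move=> c0; rewrite exprD; field; rewrite !expf_neq0. Qed.
Lemma fidM (K : fieldType) (a b c : K) k l : c != 0 ->
  (a / c ^+ k) * (b / c ^+ l) = (a * b) / c ^+ (k + l).
Proof. by move=> c0; rewrite exprD; field; rewrite !expf_neq0. Qed.

Lemma subr_Af (D : idomainType) (f : D) : f != 0 -> subr (Af f).
Proof.
move=> f0; have F0 : frac_emb f != 0 by rewrite emb_eq0.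
rewrite /Af; split.
- by exists 0, 0%N; rewrite /frac_emb rmorph0 mul0r.
- by exists 1, 0%N; rewrite /frac_emb rmorph1 expr0 divr1.
- move=> x y [d [k ->]] [e [l ->]]; exists (d * f ^+ l + e * f ^+ k), (k + l)%N.
  rewrite fidD //; congr (_ / _).
  by rewrite /frac_emb rmorphD !rmorphM !rmorphXn.
- by move=> x [d [k ->]]; exists (- d), k; rewrite /frac_emb rmorphN mulNr.
- move=> x y [d [k ->]] [e [l ->]]; exists (d * e), (k + l)%N.
  by rewrite fidM //; congr (_ / _); rewrite /frac_emb rmorphM.
Qed.

Lemma recip_SumI (D : idomainType) x : @recip_compl D x <-> SumI (@AD D) x.
Proof.
have [A0 A1 AD' AN AM] := subr_AD D.
split.
  move=> H; apply: H.
    split; [exact: SumI0 | exact: SumI1 | by move=> ? ?; apply: SumIB | by move=> ? ?; apply: SumIM].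
  by move=> d d0; apply: SumI_inv; [exists d | rewrite emb_eq0].
move=> [s [Hs ->]] S [S0 S1 SB SM] Sinv.
have SN : forall x, S x -> S (- x) by move=> y Sy; rewrite -sub0r; apply: SB.
rewrite big_seq; apply: big_ind => //.
  by move=> a b Sa Sb; rewrite -[b]opprK; apply: SB => //; apply: SN.
move=> a /Hs [[d ->] a0]; apply: Sinv; by rewrite -emb_eq0.
Qed.

Lemma SumI_exp (F : fieldType) (A : F -> Prop) (HA : subr A) x n : SumI A x -> SumI A (x ^+ n).
Proof.
case: HA => A0 A1 AD AN AM Sx; elim: n => [|n IH]; first by rewrite expr0; exact: SumI1.
by rewrite exprS; apply: SumIM.
Qed.

Lemma fidS (K : fieldType) (b c r : K) k m : c != 0 -> b != 0 ->
  (b / c ^+ k)^-1 + r * c ^+ m = (b^-1 * (c ^+ m)^-1 + r * (c ^+ k)^-1) * c ^+ (k + m).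
Proof. by move=> c0 b0; rewrite exprD; field; rewrite b0 !expf_neq0. Qed.

Lemma fidU (K : fieldType) (z y r c : K) k m : c != 0 ->
  z * y * c ^+ k * (r * c ^+ m) = 1 -> z * (y * r) = (c^-1) ^+ (k + m).
Proof.
move=> c0 E; have nz : c ^+ k * c ^+ m != 0 by rewrite mulf_neq0 // expf_neq0.
rewrite exprVn exprD; apply: (mulIf nz); rewrite mulVf // -E; ring.
Qed.

Lemma fid1 (K : fieldType) (x x' y c : K) k : c != 0 ->
  (x + x') * y = (c^-1) ^+ k -> 1 - x * y * c ^+ k = x' * y * c ^+ k.
Proof.
move=> c0 E; have H : (x + x') * y * c ^+ k = 1 by rewrite E exprVn mulVf // expf_neq0.
by rewrite -H; ring.
Qed.

Lemma S_form (D : idomainType) (f : D) : f != 0 -> forall s, SumI (Af f) s ->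
  exists r m, SumI (@AD D) r /\ s = r * frac_emb f ^+ m.
Proof.
move=> f0; have F0 : frac_emb f != 0 by rewrite emb_eq0.
have [A0 A1 AD' AN AM] := subr_AD D.
move=> s [l [Hl ->]]; elim: l Hl => [|a l IH] Hl.
  by exists 0, 0%N; split; [exact: SumI0 | rewrite big_nil mul0r].
have [[d [k Ea]] a0] : Af f a /\ a != 0 by apply: Hl; rewrite inE eqxx.
have [r [m [Rr Er]]] : exists r m, SumI (@AD D) r /\ \sum_(a <- l) a^-1 = r * frac_emb f ^+ m.
  by apply: IH => b bl; apply: Hl; rewrite inE bl orbT.
have d0 : frac_emb d != 0 by apply: contraNneq a0; rewrite Ea => ->; rewrite mul0r.
exists ((frac_emb d)^-1 * (frac_emb f ^+ m)^-1 + r * (frac_emb f ^+ k)^-1), (k + m)%N.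
split; last by rewrite big_cons Er Ea fidS.
apply: SumID; apply: SumIM => //; first by apply: SumI_inv => //; exists d.
  by rewrite -exprVn; apply: SumI_exp; [exact: subr_AD | apply: SumI_inv => //; exists f].
by rewrite -exprVn; apply: SumI_exp; [exact: subr_AD | apply: SumI_inv => //; exists f].
Qed.

Lemma RsubS (D : idomainType) (f : D) x : SumI (@AD D) x -> SumI (Af f) x.
Proof.
apply: SumI_mono => a [d ->]; exists d, 0%N; by rewrite expr0 divr1.
Qed.

Lemma FinS (D : idomainType) (f : D) : f != 0 -> SumI (Af f) (frac_emb f).
Proof.
move=> f0; have F0 : frac_emb f != 0 by rewrite emb_eq0.
have -> : frac_emb f = (frac_emb (1 : D) / frac_emb f ^+ 1)^-1.
  by rewrite /frac_emb rmorph1 expr1 mul1r invrK.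
apply: SumI_inv; first by exists 1, 1%N.
by rewrite /frac_emb rmorph1 expr1 mul1r invr_neq0.
Qed.

Definition Pf (D : idomainType) (f : D) : {fraction D} -> Prop :=
  fun x => SumI (@AD D) x /\ ~ exists y k, SumI (@AD D) y /\ x * y = (frac_emb f)^-1 ^+ k.

Lemma Pf_add (D : idomainType) (f : D) : f != 0 -> forall x x', Pf f x -> Pf f x' -> Pf f (x + x').
Proof.
move=> f0; have F0 : frac_emb f != 0 by rewrite emb_eq0.
have HS := subr_Af f0; have [B0 B1 BD BN BM] := HS.
have [A0 A1 AD' AN AM] := subr_AD D.
move=> x x' [Rx nx] [Rx' nx']; split; first exact: SumID.
move=> [y [k [Ry E]]].
have Sw : SumI (Af f) (x * y * frac_emb f ^+ k).
  apply: SumIM => //; last by apply: SumI_exp => //; exact: FinS.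
  by apply: SumIM => //; apply: RsubS.
case: (locality HS Sw) => [[s [Ss Es]]|[s [Ss Es]]].
  have [r [m [Rr Esr]]] := S_form f0 Ss; rewrite Esr in Es.
  apply: nx; exists (y * r), (k + m)%N; split; first by apply: (SumIM AM).
  exact: fidU Es.
rewrite (fid1 F0 E) in Es.
have [r [m [Rr Esr]]] := S_form f0 Ss; rewrite Esr in Es.
apply: nx'; exists (y * r), (k + m)%N; split; first by apply: (SumIM AM).
exact: fidU Es.
Qed.

Lemma Pf_prime (D : idomainType) (f : D) : f != 0 ->
  is_prime_ideal (@recip_compl D) (Pf f).
Proof.
move=> f0; have F0 : frac_emb f != 0 by rewrite emb_eq0.
have [A0 A1 AD' AN AM] := subr_AD D.
have Fi0 : forall k, (frac_emb f)^-1 ^+ k != 0 by move=> k; rewrite expf_neq0 // invr_neq0.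
split; first split.
- by move=> x [Rx _]; apply/recip_SumI.
- split; first exact: SumI0.
  by move=> [y [k [_ E]]]; move: (Fi0 k); rewrite -E mul0r eqxx.
- exact: Pf_add.
- move=> r x /recip_SumI Rr [Rx nx]; split; first by apply: (SumIM AM).
  move=> [y [k [Ry E]]]; apply: nx; exists (r * y), k; split; first by apply: (SumIM AM).
  by rewrite -E; ring.
- by move=> [_ []]; exists 1, 0%N; split; [exact: SumI1 | rewrite mulr1 expr0].
- move=> a b /recip_SumI Ra /recip_SumI Rb [Rab nab].
  case: (pselect (Pf f a)) => [|na]; first by left.
  case: (pselect (Pf f b)) => [|nb]; first by right.
  exfalso; apply: nab.
  have [y [k [Ry Ey]]] : exists y k, SumI (@AD D) y /\ a * y = (frac_emb f)^-1 ^+ k.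
    by apply: contrapT => H; apply: na; split.
  have [y' [k' [Ry' Ey']]] : exists y k, SumI (@AD D) y /\ b * y = (frac_emb f)^-1 ^+ k.
    by apply: contrapT => H; apply: nb; split.
  exists (y * y'), (k + k')%N; split; first by apply: (SumIM AM).
  by rewrite exprD -Ey -Ey'; ring.
Qed.

Lemma Q_sub_Pf (D : idomainType) (f : D) (Q : {fraction D} -> Prop) : f != 0 ->
  is_prime_ideal (@recip_compl D) Q -> ~ Q (frac_emb f)^-1 -> forall x, Q x -> Pf f x.
Proof.
move=> f0; have F0 : frac_emb f != 0 by rewrite emb_eq0.
have [A0 A1 AD' AN AM] := subr_AD D.
move=> [[QR Q0 QD QM] nQ1 Qp] nQf x Qx.
split; first by apply/recip_SumI; exact: QR.
move=> [y [k [Ry E]]].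
have RFi : @recip_compl D (frac_emb f)^-1 by apply/recip_SumI; apply: SumI_inv => //; exists f.
have : Q ((frac_emb f)^-1 ^+ k).
  by rewrite -E mulrC; apply: QM => //; apply/recip_SumI.
elim: k {E} => [|k IH]; first by rewrite expr0.
rewrite exprS => /Qp [] //.
by apply/recip_SumI; apply: SumI_exp; [exact: subr_AD | apply/recip_SumI].
Qed.

Lemma Pf_max (D : idomainType) (f : D) : f != 0 ->
  max_prime_avoiding (@recip_compl D) (frac_emb f)^-1 (Pf f).
Proof.
move=> f0; have [_ A1 _ _ _] := subr_AD D; split; first exact: Pf_prime.
  by move=> [_ []]; exists 1, 1%N; split; [exact: SumI1 | rewrite mulr1 expr1].
by move=> Q HQ nQ _; exact: Q_sub_Pf.
Qed.

Lemma p_ideal_Pf (D : idomainType) (f : D) : f != 0 -> forall x, p_ideal f x <-> Pf f x.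
Proof.
move=> f0.
have := @epsilon_spec _ (inhabits (fun _ => False))
  (max_prime_avoiding (@recip_compl D) (frac_emb f)^-1) (ex_intro _ _ (Pf_max f0)).
rewrite -/(p_ideal f) => [[Hp nPf Hmax]] x; split.
  by apply: Q_sub_Pf.
have [_ nPf' _] := Pf_max f0.
move=> Px; apply: (Hmax _ (Pf_prime f0) nPf' _ x Px) => y; exact: Q_sub_Pf.
Qed.

Lemma RcM (D : idomainType) (x y : {fraction D}) :
  @recip_compl D x -> @recip_compl D y -> @recip_compl D (x * y).
Proof.
have [_ _ _ _ AM] := subr_AD D.
by move=> /recip_SumI Rx /recip_SumI Ry; apply/recip_SumI; apply: (SumIM AM).
Qed.

Lemma RcX (D : idomainType) (x : {fraction D}) n :
  @recip_compl D x -> @recip_compl D (x ^+ n).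
Proof. by move=> /recip_SumI Rx; apply/recip_SumI; apply: SumI_exp => //; exact: subr_AD. Qed.

Lemma Rc1 (D : idomainType) : @recip_compl D 1.
Proof. by have [_ A1 _ _ _] := subr_AD D; apply/recip_SumI; exact: SumI1. Qed.

Lemma RcInv (D : idomainType) (d : D) : d != 0 -> @recip_compl D (frac_emb d)^-1.
Proof. by move=> d0; apply/recip_SumI; apply: SumI_inv; [exists d | rewrite emb_eq0]. Qed.

Unset Implicit Arguments.

Theorem mainTheorem10 (D : idomainType) (f g : D) :
  f != 0 -> g != 0 ->
  ((forall x, p_ideal g x -> p_ideal f x) <->
   (forall x, radical (@recip_compl D) (principal_ideal (@recip_compl D) (frac_emb g)^-1) x ->
              radical (@recip_compl D) (principal_ideal (@recip_compl D) (frac_emb f)^-1) x)) /\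
  ((forall x, radical (@recip_compl D) (principal_ideal (@recip_compl D) (frac_emb g)^-1) x ->
              radical (@recip_compl D) (principal_ideal (@recip_compl D) (frac_emb f)^-1) x) <->
   (exists e : nat, (1 <= e)%N /\
      principal_ideal (@recip_compl D) (frac_emb f)^-1 ((frac_emb g ^+ e)^-1))).
Proof.
move=> f0 g0.
have F0 : frac_emb f != 0 by rewrite emb_eq0.
have G0 : frac_emb g != 0 by rewrite emb_eq0.
set P1 := forall x, p_ideal g x -> p_ideal f x.
set P2 := forall x, radical _ _ x -> _.
set P3 := exists e : nat, _.
have E13 : P1 <-> P3.
  split.
    move=> H.
    have nPg : ~ Pf g (frac_emb f)^-1.
      move=> /(p_ideal_Pf g0) /H /(p_ideal_Pf f0) [_ []].
      by exists 1, 1%N; split; [apply/recip_SumI; exact: Rc1 | rewrite mulr1 expr1].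
    have [y [k [Ry E]]] : exists y k, SumI (@AD D) y /\ (frac_emb f)^-1 * y = (frac_emb g)^-1 ^+ k.
      apply: contrapT => nE; apply: nPg; split => //.
      by apply/recip_SumI; exact: RcInv.
    move/recip_SumI: Ry => Ry.
    case: k E => [|k] E.
      exists 1%N; split => //; exists (y * (frac_emb g)^-1); split; first by apply: RcM => //; exact: RcInv.
      by rewrite mulrA E expr0 mul1r expr1.
    by exists k.+1; split => //; exists y; split => //; rewrite E exprVn.
  move=> [e [e1 [r [Rr Er]]]] x /(p_ideal_Pf g0) [Rx nx]; apply/(p_ideal_Pf f0); split => //.
  move=> [y [k [Ry E]]]; apply: nx; exists (y * r ^+ k), (e * k)%N; split.
    by apply/recip_SumI; apply: RcM; [exact/recip_SumI | exact: RcX].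
  by rewrite mulrA E -exprMn -Er -exprVn -exprM.
have E23 : P2 <-> P3.
  split.
    move=> H.
    have RG := RcInv g0.
    have [_ [n [n0 [r [Rr Er]]]]] := H _ (conj RG (ex_intro _ 1%N (conj isT
      (ex_intro _ 1 (conj (@Rc1 D) (esym (mulr1 _))))))).
    by exists n; split => //; exists r; split => //; rewrite -exprVn.
  move=> [e [e1 [r [Rr Er]]]] x [Rx [n [n0 [r' [Rr' Er']]]]]; split => //.
  exists (n * e)%N; split; first by rewrite muln_gt0 n0.
  exists (r * r' ^+ e); split; first by apply: RcM => //; exact: RcX.
  by rewrite exprM Er' exprMn exprVn Er mulrA.
by split; [split => H; [apply/E23/E13 | apply/E13/E23] | exact: E23].
Qed.
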